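(* Let $\xi\in\Xi^*_{T1}\cup\Xi^*_{T2}$. Then $\xi$ is a product correlation plan, i.e. $\xi[\sigma_{T1},\sigma_{T2}]=\xi[\sigma_{T1},\varnothing]\cdot\xi[\varnothing,\sigma_{T2}]$ for all $(\sigma_{T1},\sigma_{T2})\in\Sigma_{T1}\bowtie\Sigma_{T2}$.
   Context: A finite extensive-form game is played on a tree; each internal node belongs to one of the players $T1,T2,O$ or to chance. The nodes of player $i$ are partitioned into information sets $\mathcal I_i$; all nodes of $I\in\mathcal I_i$ share the action set $A_I$. Perfect recall is assumed. The sequences of player $i$ are $\Sigma_i=\{(I,a):I\in\mathcal I_i,a\in A_I\}\cup\{\varnothing\}$. For an information set $I$ of player $i$, $\sigma(I)$ denotes the last pair $(I',a')$ of player $i$ on the root-to-$I$ path, or $\varnothing$ if $i$ does not act before $I$. Two information sets $I_i\in\mathcal I_i$, $I_j\in\mathcal I_j$ are connected ($I_i\rightleftharpoons I_j$) if there exist $v\in I_i$, $w\in I_j$ such that the root-to-$v$ path passes through $w$ or vice versa. A pair $(\sigma_i,\sigma_j)$ is relevant ($\sigma_i\bowtie\sigma_j$) if one of them is $\varnothing$ or $\sigma_i=(I_i,a_i)$, $\sigma_j=(I_j,a_j)$ with $I_i\rightleftharpoons I_j$; $\Sigma_{T1}\bowtie\Sigma_{T2}$ is the set of relevant pairs. Similarly $\sigma_i\bowtie I_j$ if $\sigma_i=\varnothing$ or $\sigma_i=(I_i,a_i)$ with $I_i\rightleftharpoons I_j$. The von Stengel–Forges polytope $\mathcal V_T$ is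 the set of nonnegative vectors $\xi$ indexed by relevant pairs with: $\xi[\varnothing,\varnothing]=1$; $\sum_{a\in A_{I}}\xi[(I,a),\sigma_{T2}]=\xi[\sigma(I),\sigma_{T2}]$ for all $I\in\mathcal I_{T1}$, $\sigma_{T2}\in\Sigma_{T2}$ with $I\bowtie\sigma_{T2}$; $\sum_{b\in A_{J}}\xi[\sigma_{T1},(J,b)]=\xi[\sigma_{T1},\sigma(J)]$ for all $J\in\mathcal I_{T2}$, $\sigma_{T1}\in\Sigma_{T1}$ with $\sigma_{T1}\bowtie J$. The semi-randomized correlation plans are $\Xi^*_{T1}=\{\xi\in\mathcal V_T:\xi[\varnothing,\sigma_{T2}]\in\{0,1\}\ \forall\sigma_{T2}\in\Sigma_{T2}\}$ and $\Xi^*_{T2}=\{\xi\in\mathcal V_T:\xi[\sigma_{T1},\varnothing]\in\{0,1\}\ \forall\sigma_{T1}\in\Sigma_{T1}\}$. *)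

(* Defs.v *)
From HB Require Import structures.
From mathcomp Require Import all_boot all_order all_algebra.
Local Open Scope ring_scope.
Set Implicit Arguments. Unset Strict Implicit. Unset Printing Implicit Defensive.
Import Order.TTheory GRing.Theory Num.Theory.

(* Finite extensive-form games with players T1, T2, O (constructor PO)
   and chance. *)

Inductive player := T1 | T2 | PO | Chance.

Definition player_eqb (p q : player) : bool :=
  match p, q with
  | T1, T1 | T2, T2 | PO, PO | Chance, Chance => true
  | _, _ => false end.

Lemma player_eqP : Equality.axiom player_eqb.
Proof. by case; case; constructor. Qed.

HB.instance Definition _ := hasDecEq.Build player player_eqP.

(* A game tree on a finite node type [V], information-set labels [I]
   and action labels [A].
   - [par v]   : parent of v (None exactly for the root);
   - [owner v] : who acts at v (None for terminal nodes);
   - [info v]  : information set of v (None for chance and terminal nodes);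
   - [act c]   : the action label of the edge from [par c] to c. *)
Record game (V I A : finType) := Game {
  root : V;
  par : V -> option V;
  owner : V -> option player;
  info : V -> option I;
  act : V -> A }.

Section Game.
Variables (V I A : finType) (G : game V I A).

Local Notation par := (par G).
Local Notation owner := (owner G).
Local Notation info := (info G).
Local Notation act := (act G).

Definition anc (u v : V) : Prop :=
  exists n, iter n (fun x => obind par x) (Some v) = Some u.

(* the sequence of (infoset, action) pairs of player p on the root-to-v
   path, from the root downwards (fuel #|V| exceeds the depth). *)
Fixpoint hist_aux (p : player) (n : nat) (v : V) : seq (I * A) :=
  match n with
  | 0 => [::]
  | n'.+1 =>
    match par v with
    | None => [::]
    | Some u =>
      let h := hist_aux p n' u in
      match info u with
      | Some J => if owner u == Some p then rcons h (J, act v) else h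
      | None => h
      end
    end
  end.

Definition hist (p : player) (v : V) : seq (I * A) := hist_aux p #|V| v.

(* sigma(I) computed at a node v of I: last pair of player p, or empty *)
Definition last_seq (s : seq (I * A)) : option (I * A) :=
  if s is x :: s' then Some (last x s') else None.

Definition sigma_at (p : player) (v : V) : option (I * A) := last_seq (hist p v).

Definition wf_game : Prop :=
  [/\
      par (root G) = None,
      (forall v, anc (root G) v),
      (forall v, (owner v == None) = ~~ [exists c, par c == Some v]),
      (forall v, (info v != None) =
         (owner v \in [:: Some T1; Some T2; Some PO]))
    & (forall u w J, info u = Some J -> info w = Some J -> owner u = owner w)]
  /\ [/\
      (forall c c' u, par c = Some u -> par c' = Some u -> act c = act c' -> c = c'),
      (forall u w J a, info u = Some J -> info w = Some J ->
         (exists c, par c = Some u /\ act c = a) <->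
         (exists c, par c = Some w /\ act c = a))
    &
      (forall u w J p, info u = Some J -> info w = Some J -> owner u = Some p ->
         hist p u = hist p w)].

Definition inA (J : I) (a : A) : bool :=
  [exists v, (info v == Some J) && [exists c, (par c == Some v) && (act c == a)]].

Definition belongs (J : I) (p : player) : Prop :=
  exists v, info v = Some J /\ owner v = Some p.

(* sequences of player p: the empty sequence (None) or pairs (J, a) *)
Definition is_seq (p : player) (s : option (I * A)) : Prop :=
  match s with
  | None => True
  | Some (J, a) => belongs J p /\ inA J a
  end.

Definition connected (J K : I) : Prop :=
  exists v w, [/\ info v = Some J, info w = Some K & (anc w v \/ anc v w)].

Definition relevant (s1 s2 : option (I * A)) : Prop :=
  s1 = None \/ s2 = None \/
  exists J1 a1 J2 a2, [/\ s1 = Some (J1, a1), s2 = Some (J2, a2) & connected J1 J2].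

Definition relevant_inf (s : option (I * A)) (K : I) : Prop :=
  s = None \/ exists J a, s = Some (J, a) /\ connected J K.

Variable R : realFieldType.

(* von Stengel--Forges polytope V_T; xi is a function on pairs of
   (possible) sequences, only its values on relevant pairs matter. *)
Definition vSF (xi : option (I * A) -> option (I * A) -> R) : Prop :=
  [/\ (forall s1 s2, is_seq T1 s1 -> is_seq T2 s2 -> relevant s1 s2 ->
         0 <= xi s1 s2),
      xi None None = 1,
      (forall J v s2, info v = Some J -> owner v = Some T1 ->
         is_seq T2 s2 -> relevant_inf s2 J ->
         \sum_(a | inA J a) xi (Some (J, a)) s2 = xi (sigma_at T1 v) s2)
    & (forall K w s1, info w = Some K -> owner w = Some T2 ->
         is_seq T1 s1 -> relevant_inf s1 K ->
         \sum_(b | inA K b) xi s1 (Some (K, b)) = xi s1 (sigma_at T2 w))].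

Definition semi_T1 (xi : option (I * A) -> option (I * A) -> R) : Prop :=
  vSF xi /\ forall s2, is_seq T2 s2 -> xi None s2 = 0 \/ xi None s2 = 1.

Definition semi_T2 (xi : option (I * A) -> option (I * A) -> R) : Prop :=
  vSF xi /\ forall s1, is_seq T1 s1 -> xi s1 None = 0 \/ xi s1 None = 1.

Definition product_plan (xi : option (I * A) -> option (I * A) -> R) : Prop :=
  forall s1 s2, is_seq T1 s1 -> is_seq T2 s2 -> relevant s1 s2 ->
    xi s1 s2 = xi s1 None * xi None s2.

End Game.

(* Main.v *)
Require Import Defs.
From mathcomp Require Import all_boot all_order all_algebra.
Set Implicit Arguments. Unset Strict Implicit. Unset Printing Implicit Defensive.
Import Order.TTheory GRing.Theory Num.Theory.

Local Notation itp G := (fun x => obind (par G) x).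

Lemma iter_None (V I A : finType) (G : game V I A) n :
  iter n (itp G) None = None.
Proof. by elim: n => //= n ->. Qed.

Lemma depth_anc (V I A : finType) (G : game V I A) n k v u :
  par G (Defs.root G) = None ->
  iter n (itp G) (Some v) = Some (Defs.root G) ->
  iter k (itp G) (Some v) = Some u -> 0 < k ->
  exists m, m < n /\ iter m (itp G) (Some u) = Some (Defs.root G).
Proof.
move=> Hr Hn Hk k0.
case: (leqP k n) => Hkn.
  exists (n - k); split; first by rewrite ltn_subrL k0 /=; apply: leq_trans Hkn.
  by rewrite -Hk -iterD subnK.
move: Hk; rewrite -(subnK (ltnW Hkn)) iterD Hn.
have -> : k - n = (k - n).-1.+1 by rewrite prednK // subn_gt0.
by rewrite iterSr /= Hr iter_None.
Qed.

Lemma hist_auxP (V I A : finType) (G : game V I A) p n v x :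
  x \in hist_aux G p n v -> exists k u c, [/\ 0 < k,
    iter k (itp G) (Some v) = Some u, par G c = Some u, info G u = Some x.1 &
    owner G u = Some p /\ act G c = x.2].
Proof.
elim: n v => [|n IH] v //=.
case Ep: (par G v) => [u0|] //.
have Hrec : x \in hist_aux G p n u0 -> exists k u c, [/\ 0 < k,
    iter k (itp G) (Some v) = Some u, par G c = Some u, info G u = Some x.1 &
    owner G u = Some p /\ act G c = x.2].
  move=> /IH [k [u [c [k0 Hk Hc Hi Ho]]]].
  by exists k.+1, u, c; split => //; rewrite iterSr /= Ep.
case Ei: (info G u0) => [J|]; last exact: Hrec.
case: ifP => Ho; last exact: Hrec.
rewrite mem_rcons in_cons => /orP [/eqP ->|]; last exact: Hrec.
exists 1, u0, v; split => //=.
by split => //; apply/eqP.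
Qed.

Lemma sigmaP (V I A : finType) (G : game V I A) p v J a :
  sigma_at G p v = Some (J, a) -> exists k u c, [/\ 0 < k,
    iter k (itp G) (Some v) = Some u, par G c = Some u, info G u = Some J &
    owner G u = Some p /\ act G c = a].
Proof.
rewrite /sigma_at /last_seq; case E: (hist G p v) => [|y s] //= [E2].
have := mem_last y s; rewrite E2 -E => /hist_auxP.
by [].
Qed.

Lemma anc_close (V I A : finType) (G : game V I A) w v u k :
  iter k (itp G) (Some v) = Some u ->
  anc G w v \/ anc G v w -> anc G w u \/ anc G u w.
Proof.
move=> Hk [[m Hm]|[m Hm]].
  case: (leqP k m) => Hkm.
    by left; exists (m - k); rewrite -Hk -iterD subnK.
  right; exists (k - m); rewrite -Hm -iterD subnK //; exact: ltnW.
right; exists (k + m); by rewrite iterD Hm.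
Qed.

Local Open Scope ring_scope.
Definition gvSF (V I A : finType) (G : game V I A) (R : realFieldType) p q
  (X : option (I * A) -> option (I * A) -> R) : Prop :=
 [/\ (forall s t, is_seq G p s -> is_seq G q t -> relevant G s t -> 0 <= X s t),
     X None None = 1,
     (forall J v t, info G v = Some J -> owner G v = Some p -> is_seq G q t ->
        relevant_inf G t J ->
        \sum_(a | inA G J a) X (Some (J, a)) t = X (sigma_at G p v) t)
   & (forall K w s, info G w = Some K -> owner G w = Some q -> is_seq G p s ->
        relevant_inf G s K ->
        \sum_(b | inA G K b) X s (Some (K, b)) = X s (sigma_at G q w))].

Lemma sum_ge (A : finType) (R : realFieldType) (P : pred A) (F : A -> R) a :
  P a -> (forall b, P b -> 0 <= F b) -> F a <= \sum_(b | P b) F b.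
Proof.
move=> Pa H; rewrite (bigD1 a) //= lerDl; apply: sumr_ge0 => b /andP [Pb _].
exact: H.
Qed.

Lemma monoA (V I A : finType) (G : game V I A) (R : realFieldType) p
  (f : option (I * A) -> R) (okn : V -> Prop) :
  wf_game G ->
  (forall u v k, (0 < k)%N -> iter k (itp G) (Some v) = Some u -> okn v -> okn u) ->
  (forall J a v, info G v = Some J -> owner G v = Some p -> okn v -> inA G J a ->
     0 <= f (Some (J, a))) ->
  (forall J v, info G v = Some J -> owner G v = Some p -> okn v ->
     \sum_(a | inA G J a) f (Some (J, a)) = f (sigma_at G p v)) ->
  forall v J, info G v = Some J -> owner G v = Some p -> okn v ->
    f (sigma_at G p v) <= f None.
Proof.
move=> [[Hr Hanc _ _ _] _] Hcl Hnn Hcons v J Hi Ho Hok.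
have [n Hn] := Hanc v.
elim/ltn_ind: n v J Hi Ho Hok Hn => n IH v J Hi Ho Hok Hn.
case E: (sigma_at G p v) => [[J' a']|] //.
have [k [u [c [k0 Hk Hc Hiu [Hou Hac]]]]] := sigmaP E.
have Hoku := Hcl _ _ _ k0 Hk Hok.
have [m [mn Hm]] := depth_anc Hr Hn Hk k0.
apply: le_trans (IH m mn u J' Hiu Hou Hoku Hm).
rewrite -(Hcons J' u) //.
apply: sum_ge.
  by apply/existsP; exists u; rewrite Hiu eqxx /=; apply/existsP; exists c; rewrite Hc Hac !eqxx.
by move=> b Hb; apply: (Hnn _ _ u).
Qed.

Lemma monoB (V I A : finType) (G : game V I A) (R : realFieldType) p
  (f : option (I * A) -> R) (okn : V -> Prop) :
  wf_game G ->
  (forall u v k, (0 < k)%N -> iter k (itp G) (Some v) = Some u -> okn v -> okn u) ->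
  (forall J a v, info G v = Some J -> owner G v = Some p -> okn v -> inA G J a ->
     0 <= f (Some (J, a))) ->
  (forall J v, info G v = Some J -> owner G v = Some p -> okn v ->
     \sum_(a | inA G J a) f (Some (J, a)) = f (sigma_at G p v)) ->
  forall v J a, info G v = Some J -> owner G v = Some p -> okn v -> inA G J a ->
    f (Some (J, a)) <= f None.
Proof.
move=> wf Hcl Hnn Hcons v J a Hi Ho Hok Ha.
apply: le_trans (monoA wf Hcl Hnn Hcons Hi Ho Hok).
rewrite -(Hcons J v) //; apply: sum_ge => // b Hb.
exact: (Hnn _ _ v).
Qed.

Lemma up (V I A : finType) (G : game V I A) (R : realFieldType) p q
  (X : option (I * A) -> option (I * A) -> R) v1 J1 a1 :
  wf_game G -> gvSF G p q X ->
  info G v1 = Some J1 -> owner G v1 = Some p -> inA G J1 a1 ->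
  forall n w K b, iter n (itp G) (Some w) = Some (Defs.root G) ->
  info G w = Some K -> owner G w = Some q -> inA G K b ->
  (anc G w v1 \/ anc G v1 w) -> X None (Some (K, b)) = 1 ->
  X (Some (J1, a1)) (Some (K, b)) = X (Some (J1, a1)) None.
Proof.
move=> wf H Hv1 Ho1 Ha1 n; have [[Hr _ _ _ _] _] := wf.
have [Hnn H11 Hcp Hcq] := H.
have Hs1 : is_seq G p (Some (J1,a1)) by split=> //; exists v1.
elim/ltn_ind: n => n IH w K b Hn Hw How Hb Hcmp HX1.
set s1 := Some (J1,a1).
have HseqK : forall b', inA G K b' -> is_seq G q (Some (K,b')).
  by move=> b' Hb'; split=> //; exists w.
have Hrel1 : relevant_inf G s1 K by right; exists J1, a1; split=>//; exists v1, w.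
have Hrel0 : relevant_inf G None K by left.
have HsumS := Hcq K w s1 Hw How Hs1 Hrel1.
have HsumN := Hcq K w None Hw How ltac:(done) Hrel0.
have Hle1 : X None (sigma_at G q w) <= 1.
  rewrite -H11.
  apply: (monoA (p:=q) (f := X None) (okn := fun _ => True) wf _ _ _ Hw How) => //.
  - move=> J a u Hu Hou _ Ha; apply: Hnn => //; last by left.
    by split=> //; exists u.
  - by move=> J u Hu Hou _; apply: Hcq => //; left.
have Hnn0 : forall b', inA G K b' -> 0 <= X None (Some (K,b')).
  by move=> b' Hb'; apply: Hnn => //; [exact: HseqK | left].
have Hrest : \sum_(b' | inA G K b' && (b' != b)) X None (Some (K,b')) = 0.
  apply/eqP; rewrite eq_le; apply/andP; split; last first.
    by apply: sumr_ge0 => b' /andP[Hb' _]; exact: Hnn0.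
  move: Hle1; rewrite -HsumN (bigD1 b) //= HX1 => h.
  by rewrite -(lerD2l 1) addr0.
have Hz : forall b', inA G K b' -> b' != b -> X None (Some (K,b')) = 0.
  move=> b' Hb' Hne; apply: (psumr_eq0P _ Hrest); last by rewrite Hb' Hne.
  by move=> i /andP[Hi _]; exact: Hnn0.
have Hz1 : forall b', inA G K b' -> b' != b -> X s1 (Some (K,b')) = 0.
  move=> b' Hb' Hne; apply/eqP; rewrite eq_le; apply/andP; split; last first.
    apply: Hnn => //; first exact: HseqK.
    by right; right; exists J1, a1, K, b'; split=> //; exists v1, w.
  rewrite -(Hz b' Hb' Hne).
  apply: (monoB (p:=p) (f := fun s => X s (Some (K,b')))
     (okn := fun v => anc G w v \/ anc G v w) wf _ _ _ Hv1 Ho1 Hcmp Ha1).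
  - by move=> u v k _ Hk; exact: (anc_close Hk).
  - move=> J a u Hu Hou Hok Ha; apply: Hnn.
    + by split=> //; exists u.
    + exact: HseqK.
    + by right; right; exists J, a, K, b'; split=> //; exists u, w.
  - move=> J u Hu Hou Hok; apply: Hcp => //; first exact: HseqK.
    right; exists K, b'; split=> //; exists w, u; split=> //.
    by case: Hok; [right|left].
have HS : X s1 (Some (K,b)) = X s1 (sigma_at G q w).
  rewrite -HsumS (bigD1 b) //= big1 ?addr0 // => b' /andP[Hb' Hne]; exact: Hz1.
have HN : X None (sigma_at G q w) = 1.
  by rewrite -HsumN (bigD1 b) //= HX1 Hrest addr0.
rewrite HS.
case E: (sigma_at G q w) => [[K' b']|] //.
have [k [u [c [k0 Hk Hc Hiu [Hou Hac]]]]] := sigmaP E.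
have [m [mn Hm]] := depth_anc Hr Hn Hk k0.
apply: (IH m mn u K' b' Hm Hiu Hou).
- apply/existsP; exists u; rewrite Hiu eqxx /=; apply/existsP; exists c.
  by rewrite Hc Hac !eqxx.
- by apply/or_comm; apply: (anc_close Hk); apply/or_comm.
- by rewrite -E.
Qed.

Lemma main_gen (V I A : finType) (G : game V I A) (R : realFieldType) p q
  (X : option (I * A) -> option (I * A) -> R) :
  wf_game G -> gvSF G p q X ->
  (forall t, is_seq G q t -> X None t = 0 \/ X None t = 1) ->
  forall s t, is_seq G p s -> is_seq G q t -> relevant G s t ->
    X s t = X s None * X None t.
Proof.
move=> wf H H01 s t Hs Ht Hrel.
have [Hnn H11 Hcp Hcq] := H.
case: Hrel => [->|[->|[J1 [a1 [J2 [b2 [E1 E2 [v1 [w2 [Hv1 Hw2 Hcmp]]]]]]]]]].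
- by rewrite H11 mul1r.
- by rewrite H11 mulr1.
subst s t.
have [[Hr Hanc _ _ H5] _] := wf.
have Ho1 : owner G v1 = Some p.
  by case: Hs => [[u [Hu Hou]] _]; rewrite -Hou; exact: H5 Hv1 Hu.
have Ho2 : owner G w2 = Some q.
  by case: Ht => [[u [Hu Hou]] _]; rewrite -Hou; exact: H5 Hw2 Hu.
have Ha1 : inA G J1 a1 by case: Hs.
have Hb2 : inA G J2 b2 by case: Ht.
have [n Hn] := Hanc w2.
case: (H01 _ Ht) => HX.
- rewrite HX mulr0; apply/eqP; rewrite eq_le; apply/andP; split; last first.
    by apply: Hnn => //; right; right; exists J1, a1, J2, b2; split=> //; exists v1, w2.
  rewrite -HX.
  apply: (monoB (p:=p) (f := fun s => X s (Some (J2,b2)))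
     (okn := fun v => anc G w2 v \/ anc G v w2) wf _ _ _ Hv1 Ho1 Hcmp Ha1).
  - by move=> u v k _ Hk; exact: (anc_close Hk).
  - move=> J a u Hu Hou Hok Ha; apply: Hnn => //.
    + by split=> //; exists u.
    + by right; right; exists J, a, J2, b2; split=> //; exists u, w2.
  - move=> J u Hu Hou Hok; apply: Hcp => //.
    right; exists J2, b2; split=> //; exists w2, u; split=> //.
    by case: Hok; [right|left].
- by rewrite HX mulr1; exact: (up wf H Hv1 Ho1 Ha1 Hn Hw2 Ho2 Hb2 Hcmp HX).
Qed.

Lemma relevant_sym (V I A : finType) (G : game V I A) s t :
  relevant G s t -> relevant G t s.
Proof.
case=> [->|[->|[J1 [a1 [J2 [b2 [E1 E2 [v [w [Hv Hw Hc]]]]]]]]]].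
- by right; left.
- by left.
right; right; exists J2, b2, J1, a1; split=> //; exists w, v; split=> //.
by case: Hc; [right|left].
Qed.

Theorem mainTheorem5 (V I A : finType) (G : game V I A) (R : realFieldType)
  (xi : option (I * A) -> option (I * A) -> R) :
  wf_game G -> semi_T1 G xi \/ semi_T2 G xi -> product_plan G xi.
Proof.
move=> wf [[Hv H01]|[Hv H01]] s1 s2 Hs1 Hs2 Hr.
- exact: (main_gen (p:=T1) (q:=T2) wf Hv H01 Hs1 Hs2 Hr).
- have Hg : gvSF G T2 T1 (fun s t => xi t s).
    case: Hv => Hnn H11 Hc1 Hc2; split.
    + by move=> s t Hs Ht Hrt; apply: Hnn => //; exact: relevant_sym.
    + exact: H11.
    + by move=> J v t Hi Ho Ht Hrt; apply: Hc2.
    + by move=> J v t Hi Ho Ht Hrt; apply: Hc1.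
  have := main_gen wf Hg H01 Hs2 Hs1 (relevant_sym Hr) => /= ->.
  by rewrite mulrC.
Qed.
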